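(* Let $X$ and $Y$ be discrete random variables taking values in a finite set $\mathcal{A}$ with $|\mathcal{A}|=M\ge 2$, with $d_{\mathrm{TV}}(X,Y)>0$. Assume that for some positive constants $\varepsilon_1,\varepsilon_2$, $$d_{\mathrm{TV}}(X,Y)\le\varepsilon_1\le 1-\frac{1}{M\varepsilon_2},\qquad \frac{d_{\mathrm{loc}}(X,Y)}{d_{\mathrm{TV}}(X,Y)}\le\varepsilon_2\le 1.$$ Then $$|H(X)-H(Y)|\le\varepsilon_1\log(M\varepsilon_2-1)+h(\varepsilon_1).$$
   Context: For discrete random variables $X,Y$ on a set $\mathcal{A}$ with probability mass functions $P_X,P_Y$, the local distance is $d_{\mathrm{loc}}(X,Y) = \sup_{u\in\mathcal{A}} |P_X(u)-P_Y(u)|$ and the total variation distance is $d_{\mathrm{TV}}(X,Y) = \frac12\sum_{u\in\mathcal{A}}|P_X(u)-P_Y(u)|$. All logarithms are natural and entropies are in nats, with $0\log0=0$. $h(x) = -x\log x-(1-x)\log(1-x)$ denotes the binary entropy function. *)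

(* Defs.v *)
From Stdlib Require Import Reals Lra Lia.
Open Scope R_scope.

(* The finite alphabet A with |A| = M is identified with {0, ..., M-1}.
   A probability mass function on A is a function p : nat -> R, of which
   only the values at i < M matter. *)

Fixpoint sum_lt (n : nat) (f : nat -> R) : R :=
  match n with
  | O => 0
  | S k => sum_lt k f + f k
  end.

(* max_lt n f = max_{i<n} f i  (0 for n = 0; only used with values >= 0) *)
Fixpoint max_lt (n : nat) (f : nat -> R) : R :=
  match n with
  | O => 0
  | S k => Rmax (max_lt k f) (f k)
  end.

Definition is_pmf (M : nat) (p : nat -> R) : Prop :=
  (forall i, (i < M)%nat -> 0 <= p i) /\ sum_lt M p = 1.

Definition xlnx (x : R) : R := if Rlt_dec 0 x then x * ln x else 0.

Definition entropy (M : nat) (p : nat -> R) : R := - sum_lt M (fun i => xlnx (p i)).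

Definition d_loc (M : nat) (p q : nat -> R) : R := max_lt M (fun i => Rabs (p i - q i)).

Definition d_TV (M : nat) (p q : nat -> R) : R := / 2 * sum_lt M (fun i => Rabs (p i - q i)).

Definition hbin (x : R) : R := - xlnx x - xlnx (1 - x).

(* Main.v *)
Require Import Defs.
From Stdlib Require Import Reals Lra Lia.
Open Scope R_scope.

Lemma ln_le_m1 t : 0 < t -> ln t <= t - 1.
Proof. intro Ht. pose proof (exp_ineq1_le (ln t)). rewrite exp_ln in H; lra. Qed.

Lemma ln_le' x y : 0 < x -> x <= y -> ln x <= ln y.
Proof. intros Hx Hxy. destruct (Rle_lt_or_eq_dec _ _ Hxy).
  left; apply ln_increasing; auto. subst; lra. Qed.

Lemma gibbs x y : 0 < x -> 0 < y -> x - y <= x * ln x - x * ln y.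
Proof.
  intros Hx Hy. assert (H := ln_le_m1 (y * / x) ltac:(apply Rmult_lt_0_compat; auto; apply Rinv_0_lt_compat; auto)).
  rewrite ln_mult, ln_Rinv in H; auto; [|apply Rinv_0_lt_compat; auto].
  apply Rmult_le_compat_l with (r := x) in H; [|lra].
  replace (x * (y * / x - 1)) with (y - x) in H by (field; lra). lra.
Qed.

Lemma xlnx_pos x : 0 < x -> xlnx x = x * ln x.
Proof. intro H; unfold xlnx; destruct (Rlt_dec 0 x); [auto|lra]. Qed.
Lemma xlnx_0 : xlnx 0 = 0.
Proof. unfold xlnx; destruct (Rlt_dec 0 0); lra. Qed.

Lemma sum_lt_ext n f g : (forall i, (i < n)%nat -> f i = g i) -> sum_lt n f = sum_lt n g.
Proof. induction n; simpl; intros; auto. rewrite IHn, H; auto; intros; apply H; lia. Qed.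
Lemma sum_lt_le n f g : (forall i, (i < n)%nat -> f i <= g i) -> sum_lt n f <= sum_lt n g.
Proof. induction n; simpl; intros; [lra|]. assert (f n <= g n) by (apply H; lia).
  assert (sum_lt n f <= sum_lt n g) by (apply IHn; intros; apply H; lia). lra. Qed.
Lemma sum_lt_plus n f g : sum_lt n (fun i => f i + g i) = sum_lt n f + sum_lt n g.
Proof. induction n; simpl; [lra|]. rewrite IHn; lra. Qed.
Lemma sum_lt_minus n f g : sum_lt n (fun i => f i - g i) = sum_lt n f - sum_lt n g.
Proof. induction n; simpl; [lra|]. rewrite IHn; lra. Qed.
Lemma sum_lt_scal n c f : sum_lt n (fun i => c * f i) = c * sum_lt n f.
Proof. induction n; simpl; [lra|]. rewrite IHn; lra. Qed.
Lemma sum_lt_const n c : sum_lt n (fun _ => c) = INR n * c.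
Proof. induction n; simpl sum_lt; [simpl; lra|]. rewrite IHn, S_INR; lra. Qed.
Lemma max_lt_ge n f i : (i < n)%nat -> f i <= max_lt n f.
Proof. induction n; intros; [lia|]. simpl. destruct (Nat.eq_dec i n).
  subst; apply Rmax_r. eapply Rle_trans; [apply IHn; lia| apply Rmax_l]. Qed.

Lemma claim1 m b : 0 <= m -> 0 <= b -> xlnx m + xlnx b <= xlnx (m + b).
Proof.
  intros Hm Hb. destruct (Rle_lt_or_eq_dec _ _ Hm) as [Hm'|<-];
  [|rewrite xlnx_0, !Rplus_0_l; lra].
  destruct (Rle_lt_or_eq_dec _ _ Hb) as [Hb'|<-]; [|rewrite xlnx_0, !Rplus_0_r; lra].
  rewrite !xlnx_pos by lra.
  assert (ln m <= ln (m+b)) by (apply ln_le'; lra).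
  assert (ln b <= ln (m+b)) by (apply ln_le'; lra).
  rewrite Rmult_plus_distr_r.
  apply Rplus_le_compat; apply Rmult_le_compat_l; lra.
Qed.

Lemma claim2 m a t : 0 <= m -> 0 <= a -> 0 < t < 1 ->
  xlnx (m + a) <= xlnx m + xlnx a - m * ln (1 - t) - a * ln t.
Proof.
  intros Hm Ha Ht.
  assert (L1 : ln (1 - t) < 0) by (rewrite <- ln_1; apply ln_increasing; lra).
  assert (L2 : ln t < 0) by (rewrite <- ln_1; apply ln_increasing; lra).
  destruct (Rle_lt_or_eq_dec _ _ Hm) as [Hm'|<-];
  [|rewrite xlnx_0, !Rplus_0_l; nra].
  destruct (Rle_lt_or_eq_dec _ _ Ha) as [Ha'|<-]; [|rewrite xlnx_0, !Rplus_0_r; nra].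
  rewrite !xlnx_pos by lra.
  pose proof (gibbs m ((1-t)*(m+a)) Hm' ltac:(apply Rmult_lt_0_compat; lra)).
  pose proof (gibbs a (t*(m+a)) Ha' ltac:(apply Rmult_lt_0_compat; lra)).
  rewrite ln_mult in H, H0 by lra. nra.
Qed.

Lemma claim3a a c : 0 <= a -> a <= c -> 0 < c -> xlnx a <= a * ln c.
Proof.
  intros Ha Hac Hc. destruct (Rle_lt_or_eq_dec _ _ Ha) as [Ha'|<-];
  [|rewrite xlnx_0; lra]. rewrite xlnx_pos by lra.
  assert (ln a <= ln c) by (apply ln_le'; lra). nra.
Qed.

Definition ind (x : R) : R := if Rlt_dec 0 x then 1 else 0.

Lemma claim3b b K : 0 <= b -> 0 < K -> - xlnx b <= ind b * K - b - b * ln K.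
Proof.
  intros Hb HK. unfold ind. destruct (Rle_lt_or_eq_dec _ _ Hb) as [Hb'|<-].
  - rewrite xlnx_pos by lra. destruct (Rlt_dec 0 b); [|lra].
    pose proof (gibbs b K Hb' HK). lra.
  - rewrite xlnx_0. destruct (Rlt_dec 0 0); lra.
Qed.

Lemma ind_ge b c : 0 <= b -> b <= c -> b <= c * ind b.
Proof. intros. unfold ind; destruct (Rlt_dec 0 b); lra. Qed.

Lemma core M p q t e :
  is_pmf M p -> is_pmf M q -> t = d_TV M p q -> 0 < t < 1 -> 0 < e ->
  (forall i, (i < M)%nat -> Rabs (p i - q i) <= e * t) ->
  entropy M q - entropy M p <= hbin t + t * ln (INR M * e - 1).
Proof.
  intros [Pp Sp] [Pq Sq] Ht Htr He Hloc.
  set (a := fun i => Rmax 0 (p i - q i)).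
  set (b := fun i => Rmax 0 (q i - p i)).
  set (m := fun i => Rmin (p i) (q i)).
  assert (Fp : forall i, p i = m i + a i) by (intro i; unfold m, a, Rmin, Rmax;
    destruct (Rle_dec (p i) (q i)); destruct (Rle_dec 0 (p i - q i)); lra).
  assert (Fq : forall i, q i = m i + b i) by (intro i; unfold m, b, Rmin, Rmax;
    destruct (Rle_dec (p i) (q i)); destruct (Rle_dec 0 (q i - p i)); lra).
  assert (Fab : forall i, a i + b i = Rabs (p i - q i)) by (intro i; unfold a, b, Rmax, Rabs;
    destruct (Rcase_abs (p i - q i)); destruct (Rle_dec 0 (p i - q i));
    destruct (Rle_dec 0 (q i - p i)); lra).
  assert (Fa0 : forall i, 0 <= a i) by (intro; apply Rmax_l).
  assert (Fb0 : forall i, 0 <= b i) by (intro; apply Rmax_l).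
  assert (Fm0 : forall i, (i < M)%nat -> 0 <= m i) by (intros i Hi; unfold m, Rmin;
    destruct (Rle_dec (p i) (q i)); [apply Pp|apply Pq]; auto).
  assert (Fdis : forall i, ind (a i) + ind (b i) <= 1) by (intro i; unfold ind, a, b, Rmax;
    destruct (Rle_dec 0 (p i - q i)); destruct (Rle_dec 0 (q i - p i));
    destruct (Rlt_dec 0 (p i - q i)); destruct (Rlt_dec 0 (q i - p i));
    destruct (Rlt_dec 0 0); lra).
  assert (Fa1 : forall i, (i < M)%nat -> a i <= e * t) by
    (intros i Hi; pose proof (Hloc i Hi); pose proof (Fab i); pose proof (Fb0 i); lra).
  assert (Fb1 : forall i, (i < M)%nat -> b i <= e * t) by
    (intros i Hi; pose proof (Hloc i Hi); pose proof (Fab i); pose proof (Fa0 i); lra).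
  assert (Sab : sum_lt M a + sum_lt M b = 2 * t).
  { rewrite <- sum_lt_plus, Ht; unfold d_TV.
    rewrite (sum_lt_ext M _ (fun i => Rabs (p i - q i))) by (intros; apply Fab). lra. }
  assert (Sdiff : sum_lt M a - sum_lt M b = 0).
  { rewrite <- sum_lt_minus.
    rewrite (sum_lt_ext M _ (fun i => p i - q i)) by (intros; rewrite (Fp i), (Fq i); lra).
    rewrite sum_lt_minus; lra. }
  assert (Sa : sum_lt M a = t) by lra.
  assert (Sb : sum_lt M b = t) by lra.
  assert (Sm : sum_lt M m = 1 - t).
  { rewrite (sum_lt_ext M m (fun i => p i - a i)) by (intros; rewrite (Fp i); lra).
    rewrite sum_lt_minus; lra. }
  set (na := sum_lt M (fun i => ind (a i))).
  set (nb := sum_lt M (fun i => ind (b i))).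
  assert (Nab : na + nb <= INR M).
  { unfold na, nb; rewrite <- sum_lt_plus.
    replace (INR M) with (sum_lt M (fun _ => 1)) by (rewrite sum_lt_const; lra).
    apply sum_lt_le; intros; apply Fdis. }
  assert (Na : t <= e * t * na).
  { rewrite <- Sa at 1; unfold na; rewrite <- sum_lt_scal; apply sum_lt_le; intros.
    apply ind_ge; [apply Fa0 | apply Fa1; auto]. }
  assert (Nb : t <= e * t * nb).
  { rewrite <- Sb at 1; unfold nb; rewrite <- sum_lt_scal; apply sum_lt_le; intros.
    apply ind_ge; [apply Fb0 | apply Fb1; auto]. }
  assert (Na1 : 1 <= e * na) by nra.
  assert (Nb1 : 1 <= e * nb) by nra.
  assert (Nbpos : 0 < nb) by nra.
  assert (C1 : sum_lt M (fun i => xlnx (m i)) + sum_lt M (fun i => xlnx (b i))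
               <= sum_lt M (fun i => xlnx (q i))).
  { rewrite <- sum_lt_plus; apply sum_lt_le; intros; rewrite (Fq i); apply claim1; auto. }
  assert (C2 : sum_lt M (fun i => xlnx (p i)) <=
     sum_lt M (fun i => xlnx (m i)) + sum_lt M (fun i => xlnx (a i))
     - (1 - t) * ln (1 - t) - t * ln t).
  { assert (sum_lt M (fun i => xlnx (p i)) <= sum_lt M (fun i =>
       xlnx (m i) + xlnx (a i) + (- ln (1 - t)) * m i + (- ln t) * a i)).
    { apply sum_lt_le; intros; rewrite (Fp i).
      pose proof (claim2 (m i) (a i) t (Fm0 i H) (Fa0 i) Htr). lra. }
    rewrite !sum_lt_plus, !sum_lt_scal, Sm, Sa in H. lra. }
  assert (C3 : sum_lt M (fun i => xlnx (a i)) <= t * ln (e * t)).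
  { assert (sum_lt M (fun i => xlnx (a i)) <= sum_lt M (fun i => ln (e * t) * a i)).
    { apply sum_lt_le; intros. rewrite Rmult_comm; apply claim3a; auto. nra. }
    rewrite sum_lt_scal, Sa in H. lra. }
  set (K := t / nb).
  assert (HK : 0 < K) by (unfold K; apply Rdiv_lt_0_compat; lra).
  assert (C4 : - sum_lt M (fun i => xlnx (b i)) <= - t * ln K).
  { assert (sum_lt M (fun i => - xlnx (b i)) <=
            sum_lt M (fun i => ind (b i) * K - b i - b i * ln K)).
    { apply sum_lt_le; intros; apply claim3b; auto. }
    unfold Rminus in H; rewrite !sum_lt_plus in H.
    rewrite (sum_lt_ext M (fun i => - b i) (fun i => (-1) * b i)) in H by (intros; ring).
    rewrite (sum_lt_ext M (fun i => - (b i * ln K)) (fun i => (- ln K) * b i)) in H by (intros; ring).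
    rewrite (sum_lt_ext M (fun i => ind (b i) * K) (fun i => K * ind (b i))) in H by (intros; ring).
    rewrite (sum_lt_ext M (fun i => - xlnx (b i)) (fun i => (-1) * xlnx (b i))) in H by (intros; ring).
    rewrite !sum_lt_scal in H. fold nb in H. rewrite Sb in H.
    replace (K * nb) with t in H by (unfold K; field; lra). lra. }
  assert (Hh : hbin t = - t * ln t - (1 - t) * ln (1 - t)).
  { unfold hbin; rewrite !xlnx_pos by lra; ring. }
  assert (LK : ln K = ln t - ln nb).
  { unfold K, Rdiv; rewrite ln_mult, ln_Rinv; try lra. apply Rinv_0_lt_compat; lra. }
  assert (Le : ln (e * t) = ln e + ln t) by (apply ln_mult; lra).
  assert (Lfin : ln (e * nb) <= ln (INR M * e - 1)) by (apply ln_le'; nra).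
  rewrite ln_mult in Lfin by lra.
  unfold entropy. nra.
Qed.

Lemma hbin_mono L t e1 : 0 < t -> t <= e1 -> e1 < 1 -> 0 <= ln (1 - e1) - ln e1 + L ->
  L * t + hbin t <= L * e1 + hbin e1.
Proof.
  intros. unfold hbin. rewrite !xlnx_pos by lra.
  pose proof (gibbs t e1 ltac:(lra) ltac:(lra)).
  pose proof (gibbs (1 - t) (1 - e1) ltac:(lra) ltac:(lra)).
  nra.
Qed.

Lemma dTV_sym M p q : d_TV M p q = d_TV M q p.
Proof. unfold d_TV; f_equal; apply sum_lt_ext; intros; apply Rabs_minus_sym. Qed.

Theorem corollary2 (M : nat) (p q : nat -> R) (eps1 eps2 : R) :
  (2 <= M)%nat ->
  is_pmf M p -> is_pmf M q ->
  0 < d_TV M p q ->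
  0 < eps1 -> 0 < eps2 ->
  d_TV M p q <= eps1 ->
  eps1 <= 1 - / (INR M * eps2) ->
  d_loc M p q / d_TV M p q <= eps2 ->
  eps2 <= 1 ->
  Rabs (entropy M p - entropy M q) <= eps1 * ln (INR M * eps2 - 1) + hbin eps1.
Proof.
  intros HM Pp Pq Ht He1 He2 Hte1 He1b Hloc He2b.
  set (t := d_TV M p q) in *.
  assert (HMpos : 0 < INR M) by (apply lt_0_INR; lia).
  assert (HMe : 0 < INR M * eps2) by nra.
  assert (Hinv : 0 < / (INR M * eps2)) by (apply Rinv_0_lt_compat; lra).
  assert (He1lt : eps1 < 1) by lra.
  assert (Hlt : forall i, (i < M)%nat -> Rabs (p i - q i) <= eps2 * t).
  { intros i Hi. pose proof (max_lt_ge M (fun i => Rabs (p i - q i)) i Hi). simpl in H.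
    fold (d_loc M p q) in H.
    apply Rmult_le_compat_r with (r := t) in Hloc; [|lra].
    unfold Rdiv in Hloc; rewrite Rmult_assoc, Rinv_l, Rmult_1_r in Hloc by lra. lra. }
  assert (B1 := core M p q t eps2 Pp Pq eq_refl ltac:(lra) He2 Hlt).
  assert (B2 := core M q p t eps2 Pq Pp (dTV_sym M p q) ltac:(lra) He2
     ltac:(intros i Hi; rewrite Rabs_minus_sym; apply Hlt; auto)).
  assert (HMe1 : 0 < INR M * eps2 - 1).
  { assert (/ (INR M * eps2) < 1) by lra.
    apply Rmult_lt_compat_l with (r := INR M * eps2) in H; [|lra].
    rewrite Rinv_r in H by lra. lra. }
  assert (Hmono := hbin_mono (ln (INR M * eps2 - 1)) t eps1 Ht Hte1 He1lt).
  assert (0 <= ln (1 - eps1) - ln eps1 + ln (INR M * eps2 - 1)).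
  { assert (Hlm : ln ((1 - eps1) * (INR M * eps2 - 1)) = ln (1 - eps1) + ln (INR M * eps2 - 1))
      by (apply ln_mult; lra).
    assert ((1 - eps1) * (INR M * eps2 - 1) >= eps1).
    { assert (H : 1 - eps1 >= / (INR M * eps2)) by lra.
      assert ((1 - eps1) * (INR M * eps2) >= 1).
      { apply Rmult_ge_compat_r with (r := INR M * eps2) in H; [|lra].
        rewrite Rinv_l in H by lra. lra. }
      nra. }
    assert (ln eps1 <= ln ((1 - eps1) * (INR M * eps2 - 1))) by (apply ln_le'; lra).
    lra. }
  specialize (Hmono H).
  unfold Rabs; destruct (Rcase_abs (entropy M p - entropy M q)); lra.
Qed.
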